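(* Let $d\in\mathbb{Z}_{\ge1}$, $\gamma\in\mathbb{Z}_{\ge2}$, and let integers $y(\ell),x^{\mathrm{bin}}(\ell),z(\ell)$ ($\ell\in\{0,\dots,d-1\}$) and $r(\ell)$ ($\ell\in\{0,\dots,d\}$) form a solution of the constraint system $\mathcal{S}(d,\gamma)$. Then for every $\ell\in\{0,\dots,d-1\}$: $$r(\ell)=\begin{cases} r(\ell+1), & \text{if } r(\ell+1)<\gamma^{2^\ell},\\ r(\ell+1)/\gamma^{2^\ell}, & \text{if } r(\ell+1)\ge\gamma^{2^\ell},\end{cases}$$ and $r(\ell)\le\gamma^{2^\ell}-1$ for every $\ell\in\{0,\dots,d\}$.
   Context: Constraint system $\mathcal{S}(d,\gamma)$: for given integers $d\ge1$, $\gamma\ge2$, integer variables $y(\ell),x^{\mathrm{bin}}(\ell),z(\ell)$ for $\ell\in\{0,\dots,d-1\}$ and $r(\ell)$ for $\ell\in\{0,\dots,d\}$, subject to, for every $\ell\in\{0,\dots,d-1\}$ (writing $g_\ell:=\gamma^{2^\ell}$): (C1) $y(\ell)\ge0$; (C2) $y(\ell)\le r(\ell+1)/g_\ell+1/(g_\ell+1)$; (C3) $y(\ell)\ge r(\ell+1)/g_\ell-(g_\ell-1)/g_\ell$; (C4) $x^{\mathrm{bin}}(\ell)\ge0$; (C5) $x^{\mathrm{bin}}(\ell)\le1$; (C6) $x^{\mathrm{bin}}(\ell)\le y(\ell)$; (C7) $y(\ell)\le(g_\ell+1)x^{\mathrm{bin}}(\ell)$; (C8) $r(\ell)\ge0$;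 (C9) $(g_\ell-1)z(\ell)+r(\ell)=r(\ell+1)$; (C10) $z(\ell)\ge0$; (C11) $z(\ell)\ge -g_\ell+g_\ell x^{\mathrm{bin}}(\ell)+r(\ell)$; (C12) $z(\ell)\le g_\ell x^{\mathrm{bin}}(\ell)$; (C13) $z(\ell)\le r(\ell)$; and additionally $r(0)=1$, $r(d)\ge2$, $r(d)\le\gamma^{2^d-1}$. *)

(* Defs.v *)
(* Integer variables are int; the constraints with fractions
   are interpreted in rat via the cast z%:~R. *)
From HB Require Import structures.
From mathcomp Require Import all_boot all_order all_algebra.
Set Implicit Arguments. Unset Strict Implicit. Unset Printing Implicit Defensive.
Import Order.TTheory GRing.Theory Num.Theory.
Local Open Scope ring_scope.

Definition gexp (gamma : int) (l : nat) : int := gamma ^+ (2 ^ l)%N.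

Definition Q (z : int) : rat := z%:~R.

(* The constraint system S(d, gamma); variables are functions nat -> int,
   only the indices in the stated ranges are constrained. *)
Definition system_S (d : nat) (gamma : int)
    (y xbin z r : nat -> int) : Prop :=
  (forall l : nat, (l < d)%N ->
     let g := gexp gamma l in
     0 <= y l
  /\ Q (y l) <= Q (r l.+1) / Q g + 1 / (Q g + 1)
  /\ Q (r l.+1) / Q g - (Q g - 1) / Q g <= Q (y l)
  /\ 0 <= xbin l
  /\ xbin l <= 1
  /\ xbin l <= y l
  /\ y l <= (g + 1) * xbin l
  /\ 0 <= r l
  /\ (g - 1) * z l + r l = r l.+1
  /\ 0 <= z l
  /\ - g + g * xbin l + r l <= z l
  /\ z l <= g * xbin l
  /\ z l <= r l)
  /\ r 0%N = 1
  /\ 2 <= r d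
  /\ r d <= gamma ^+ (2 ^ d - 1)%N.

(* Main.v *)
Require Import Defs.
From HB Require Import structures.
From mathcomp Require Import all_boot all_order all_algebra.
From mathcomp Require Import zify ring lra.
Import Order.TTheory GRing.Theory Num.Theory.
Local Open Scope ring_scope.

Lemma level (g y x z rl rl1 : int) : 2 <= g ->
  0 <= y ->
  Q y <= Q rl1 / Q g + 1 / (Q g + 1) ->
  Q rl1 / Q g - (Q g - 1) / Q g <= Q y ->
  0 <= x -> x <= 1 -> x <= y -> y <= (g + 1) * x ->
  0 <= rl -> (g - 1) * z + rl = rl1 -> 0 <= z ->
  - g + g * x + rl <= z -> z <= g * x -> z <= rl ->
  (rl = rl1 /\ rl1 < g) \/ (rl1 = g * rl /\ 1 <= rl).
Proof.
move=> g2 y0 C2 C3 x0 x1 xy yx r0 C9 z0 C11 C12 C13.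
have G0 : 0 < Q g by rewrite /Q ltr0z; lia.
have G2 : 2 <= Q g by rewrite /Q (_ : 2 = (2:int)%:~R) // ler_int.
have [x00|x1'] : x = 0 \/ x = 1 by lia.
- left. rewrite x00 in xy yx C11 C12. have z00 : z = 0 by lia. have y00 : y = 0 by lia.
  have e : rl = rl1 by rewrite -C9 z00; ring.
  split => //. rewrite -e. rewrite y00 -e in C3.
  case: (ltP rl g) => // hg. exfalso.
  have : Q g <= Q rl by rewrite /Q ler_int.
  move=> h.
  have E : Q rl / Q g - (Q g - 1) / Q g = (Q rl - (Q g - 1)) * (Q g)^-1
    by ring.
  rewrite E in C3. have : 0 < (Q rl - (Q g - 1)) * (Q g)^-1.
    apply: mulr_gt0; first lra. by rewrite invr_gt0.
  by rewrite /Q rmorph0 in C3; lra.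
- right. rewrite x1' in xy yx C11 C12.
  have e : rl1 = g * rl by rewrite -C9 (_ : z = rl); [ring| lia].
  split => //.
  have Y1 : 1 <= Q y by rewrite /Q (_ : 1 = (1:int)%:~R) // ler_int; lia.
  have : Q rl1 / Q g = Q rl by (rewrite e /Q intrM mulrC mulKf //; rewrite intr_eq0; lia).
  move=> E; rewrite E in C2.
  have t1 : 1 / (Q g + 1) < 1 by rewrite mul1r invf_lt1; lra.
  have : 0 < Q rl by lra.
  rewrite /Q ltr0z; lia.
Qed.

Lemma g_ge2 (gamma : int) l : 2 <= gamma -> 2 <= gexp gamma l.
Proof.
move=> h; rewrite /gexp.
have : gamma <= gamma ^+ (2 ^ l)%N.
  apply: ler_eXnr; [by rewrite expn_gt0 | lia].
lia.
Qed.

Theorem mainTheorem6 (d : nat) (gamma : int) (y xbin z r : nat -> int) :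
  (1 <= d)%N -> 2 <= gamma ->
  system_S d gamma y xbin z r ->
  (forall l : nat, (l < d)%N ->
     (r l.+1 < gexp gamma l -> r l = r l.+1) /\
     (gexp gamma l <= r l.+1 -> Q (r l) = Q (r l.+1) / Q (gexp gamma l)))
  /\ (forall l : nat, (l <= d)%N -> r l <= gexp gamma l - 1).
Proof.
move=> d1 g2 [H [_ [_ rd]]].
have L : forall l, (l < d)%N -> let g := gexp gamma l in
   (r l = r l.+1 /\ r l.+1 < g) \/ (r l.+1 = g * r l /\ 1 <= r l).
  move=> l ld /=; have := H l ld; rewrite /=.
  move=> [C1 [C2 [C3 [C4 [C5 [C6 [C7 [C8 [C9 [C10 [C11 [C12 C13]]]]]]]]]]]].
  exact: (@level _ _ _ _ _ _ (g_ge2 gamma l g2) C1 C2 C3 C4 C5 C6 C7 C8 C9 C10 C11 C12 C13).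
split.
  move=> l ld; have g2' := g_ge2 gamma l g2; case: (L l ld) => [[e h]|[e h]]; split=> //.
  - move=> h'; lia.
  - move=> h'; have : gexp gamma l * 1 <= gexp gamma l * r l by rewrite ler_pM2l //; lia.
    lia.
  - move=> _; rewrite e /Q intrM mulrC mulKf //.
    by rewrite intr_eq0; lia.
have top : r d <= gexp gamma d - 1.
  rewrite /gexp.
  have -> : (2 ^ d = (2 ^ d - 1).+1)%N by rewrite subn1 prednK // expn_gt0.
  rewrite exprS.
  have : 0 < gamma ^+ (2 ^ d - 1)%N by apply: exprn_gt0; lia.
  set p := gamma ^+ _ in rd *. move=> p0.
  have : 2 * p <= gamma * p by rewrite ler_pM2r.
  lia.
suff : forall k, (k <= d)%N -> r (d - k)%N <= gexp gamma (d - k)%N - 1.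
  move=> S l ld; have := S (d - l)%N (leq_subr _ _).
  by rewrite subKn.
elim=> [|k IH] kd; first by rewrite subn0.
have ld : (d - k.+1 < d)%N by lia.
have e : ((d - k.+1).+1 = d - k)%N by lia.
have := IH (ltnW kd); rewrite -e.
have g2' := g_ge2 gamma (d - k.+1) g2.
have -> : gexp gamma (d - k.+1).+1 = gexp gamma (d - k.+1) * gexp gamma (d - k.+1).
  by rewrite /gexp expnS mul2n -addnn exprD.
case: (L _ ld) => [[e1 h]|[e1 h]]; first lia.
rewrite e1 => hh.
set G := gexp gamma _ in hh g2' *.
have : G * r (d - k.+1)%N < G * G by lia.
rewrite ltr_pM2l; [lia|lia].
Qed.
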